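(* Let $H$ be a real symmetric positive definite $d\times d$ matrix and $L$ a real $d\times d$ matrix with $L^TH+HL=0$. Consider an $s$-stage explicit Runge–Kutta method ($s\ge 4$) applied to $\frac{d}{dt}u=Lu$, i.e. $u_{n+1}=G_s u_n$ with $G_s=\sum_{k=0}^s a_k (hL)^k$, $a_0=1$, $a_s\neq0$, $h>0$, and suppose the method is of fourth order, i.e. $a_k=1/k!$ for $k=1,2,3,4$. Suppose that $b_k=0$ for all $3\le k\le s-2$ and that $b_{s-1}=a_{s-1}^2-2a_sa_{s-2}<0$. Then the order of energy accuracy is $r=2s-3$. Furthermore, the method is strongly stable (i.e. $\|u_{n+1}\|_H\le\|u_n\|_H$ for every $u_n$) provided $$h\|L\|\le \lambda=\sqrt{\frac{2a_sa_{s-2}-a_{s-1}^2}{a_s^2}}.$$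
   Context: For $0\le k\le s$, $b_k=\sum_{i=\max(0,2k-s)}^{\min(2k,s)}(-1)^{k+i}a_i a_{2k-i}$. With energy $\mathcal{E}=\tfrac12\|u\|_H^2=\tfrac12\langle u,Hu\rangle$, one has $\mathcal{E}_{n+1}=\mathcal{E}_n+\tfrac12\sum_{k=1}^s b_k h^{2k}\|L^k u_n\|_H^2$. The leading index $m$ is the smallest $k\ge1$ with $b_k\ne0$ and the order of energy accuracy is $r=2m-1$. Here $\|\cdot\|_H$ is the norm $\|x\|_H=\sqrt{\langle x,Hx\rangle}$ and $\|L\|=\sup_{\|v\|_H=1}\|Lv\|_H$. *)

(* Defs.v *)
From HB Require Import structures.
From mathcomp Require Import all_boot all_order all_algebra.
From mathcomp Require Import boolp classical_sets reals.
Set Implicit Arguments. Unset Strict Implicit. Unset Printing Implicit Defensive.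
Import Order.TTheory GRing.Theory Num.Theory.
Local Open Scope ring_scope.
Local Open Scope classical_set_scope.

Section Defs.
Variable R : realType.

Definition bcoef (a : nat -> R) (s k : nat) : R :=
  \sum_((k.*2 - s)%N <= i < (minn k.*2 s).+1)
     (-1) ^+ (k + i) * a i * a (k.*2 - i)%N.

Definition leading_index (a : nat -> R) (s m : nat) : Prop :=
  [/\ (1 <= m <= s)%N, bcoef a s m != 0 &
      forall k, (1 <= k < m)%N -> bcoef a s k = 0].

Definition energy_order (a : nat -> R) (s r : nat) : Prop :=
  exists m, leading_index a s m /\ r = (m.*2 - 1)%N.

Variable d : nat.

Definition sym_posdef (H : 'M[R]_d) : Prop :=
  H^T = H /\ forall x : 'cV[R]_d, x != 0 -> 0 < (x^T *m H *m x) 0 0.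

Definition Hinner (H : 'M[R]_d) (x y : 'cV[R]_d) : R := (x^T *m H *m y) 0 0.

Definition Hnorm (H : 'M[R]_d) (x : 'cV[R]_d) : R := Num.sqrt (Hinner H x x).

Definition Hopnorm (H L : 'M[R]_d) : R :=
  sup [set Hnorm H (L *m v) | v in [set v : 'cV[R]_d | Hnorm H v = 1]].

Definition RKmat (a : nat -> R) (s : nat) (h : R) (L : 'M[R]_d) : 'M[R]_d :=
  \sum_(k < s.+1) a k *: (h *: L) ^+ k.

End Defs.

(* Main.v *)
Require Import Defs.
From HB Require Import structures.
From mathcomp Require Import all_boot all_order all_algebra.
From mathcomp Require Import boolp classical_sets reals.
From mathcomp Require Import zify ring lra.
Import Order.TTheory GRing.Theory Num.Theory.
Set Implicit Arguments. Unset Strict Implicit.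
Local Open Scope ring_scope.

Section Help.
Variable R : realType.
Variable d : nat.
Variable H : 'M[R]_d.
Hypothesis Hsym : H^T = H.
Hypothesis Hpos : forall x : 'cV[R]_d, x != 0 -> 0 < (x^T *m H *m x) 0 0.

Lemma HinnerDl x1 x2 y : Hinner H (x1 + x2) y = Hinner H x1 y + Hinner H x2 y.
Proof. by rewrite /Hinner linearD /= !mulmxDl mxE. Qed.
Lemma HinnerZl c x y : Hinner H (c *: x) y = c * Hinner H x y.
Proof. by rewrite /Hinner linearZ /= -!scalemxAl mxE. Qed.
Lemma HinnerDr x y1 y2 : Hinner H x (y1 + y2) = Hinner H x y1 + Hinner H x y2.
Proof. by rewrite /Hinner !mulmxDr mxE. Qed.
Lemma HinnerZr c x y : Hinner H x (c *: y) = c * Hinner H x y.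
Proof. by rewrite /Hinner -!scalemxAr mxE. Qed.
Lemma Hinner0l y : Hinner H 0 y = 0.
Proof. by rewrite /Hinner linear0 !mul0mx mxE. Qed.
Lemma Hinner_suml n (F : 'I_n -> 'cV[R]_d) y :
  Hinner H (\sum_(i < n) F i) y = \sum_(i < n) Hinner H (F i) y.
Proof. by rewrite /Hinner linear_sum /= !mulmx_suml summxE. Qed.
Lemma Hinner_sumr n (F : 'I_n -> 'cV[R]_d) x :
  Hinner H x (\sum_(i < n) F i) = \sum_(i < n) Hinner H x (F i).
Proof. by rewrite /Hinner mulmx_sumr summxE. Qed.
Lemma Hinner_sym x y : Hinner H x y = Hinner H y x.
Proof.
rewrite /Hinner -[in LHS](trmxK (x^T *m H *m y)) [in LHS]mxE.
by rewrite !trmx_mul trmxK Hsym mulmxA.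
Qed.

Lemma q_ge0 x : 0 <= Hinner H x x.
Proof.
have [->|nz] := eqVneq x 0; first by rewrite Hinner0l.
exact/ltW/(Hpos nz).
Qed.
Lemma q_eq0 x : Hinner H x x = 0 -> x = 0.
Proof.
move=> h0; apply/eqP; apply/negPn/negP => nz.
by move: (Hpos nz); rewrite -/(Hinner H x x) h0 ltxx.
Qed.

Lemma Hinner_CS x y : Hinner H x y ^+ 2 <= Hinner H x x * Hinner H y y.
Proof.
have [->|nz] := eqVneq y 0.
  by rewrite Hinner_sym Hinner0l Hinner0l expr0n /= mulr0.
have qy : 0 < Hinner H y y by exact: (Hpos nz).
set t := Hinner H x y / Hinner H y y.
have := q_ge0 (x + (- t) *: y).
rewrite !(HinnerDl, HinnerDr, HinnerZl, HinnerZr) (Hinner_sym y x).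
rewrite /t => h.
have e : Hinner H x x + - (Hinner H x y / Hinner H y y) * Hinner H x y +
     (- (Hinner H x y / Hinner H y y) * Hinner H x y +
      - (Hinner H x y / Hinner H y y) * (- (Hinner H x y / Hinner H y y) * Hinner H y y))
   = (Hinner H x x * Hinner H y y - Hinner H x y ^+ 2) / Hinner H y y.
  by field; rewrite gt_eqF.
rewrite e pmulr_lge0 ?invr_gt0 // subr_ge0 in h.
by [].
Qed.

Variable M : 'M[R]_d.
Hypothesis Mskew : M^T *m H + H *m M = 0.

Lemma Hinner_skew x y : Hinner H (M *m x) y = - Hinner H x (M *m y).
Proof.
have e : M^T *m H = - (H *m M) by apply/eqP; rewrite -addr_eq0 Mskew.
rewrite /Hinner trmx_mul -(mulmxA x^T) e mulmxN mulNmx mxE.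
by rewrite !mulmxA.
Qed.

Variable u : 'cV[R]_d.
Definition cc i j := Hinner H ((M ^+ i) *m u) ((M ^+ j) *m u).

Lemma cc_shift i j : cc i.+1 j = - cc i j.+1.
Proof. by rewrite /cc !exprS -!mulmxE -!mulmxA Hinner_skew. Qed.

Lemma cc_0 i j : cc i j = (-1) ^+ i * cc 0 (i + j).
Proof.
elim: i j => [|i IH] j; first by rewrite expr0 mul1r add0n.
by rewrite cc_shift IH -addSnnS exprS mulN1r mulNr.
Qed.

Lemma cc_even k : cc 0 k.*2 = (-1) ^+ k * cc k k.
Proof.
by rewrite (cc_0 k k) addnn -signr_odd signrMK.
Qed.

Lemma cc_odd k : cc 0 k.*2.+1 = 0.
Proof.
have h1 := cc_0 k k.+1; have h2 := cc_0 k.+1 k.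
have hs : cc k k.+1 = cc k.+1 k by rewrite /cc Hinner_sym.
rewrite h1 h2 addnS addSn addnn exprS -signr_odd in hs.
set X := cc 0 _ in hs *.
have hm : (-1) ^+ odd k * (-1) ^+ odd k = 1 :> R by case: (odd k); rewrite /= ?expr0 ?expr1 ?mulr1 ?mulrNN ?mul1r.
have : X = - X.
  rewrite -[LHS]mul1r -hm -mulrA hs mulN1r mulNr mulrN mulrA hm mul1r //.
lra.
Qed.

Lemma energy (a : nat -> R) s :
  \sum_(i < s.+1) \sum_(j < s.+1) a i * a j * cc i j =
  \sum_(k < s.+1) bcoef a s k * cc k k.
Proof.
under eq_bigr => i _ do rewrite -(big_mkord xpredT (fun j => a i * a j * cc i j)).
rewrite -(big_mkord xpredT (fun i => \sum_(0<=j<s.+1) a i * a j * cc i j)).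
rewrite -(big_mkord xpredT (fun k => bcoef a s k * cc k k)).
transitivity (\sum_(0<=i<s.+1) \sum_(0<=j<s.+1) \sum_(0<=k<s.+1)
  (if (i + j == k.*2)%N then (-1)^+(k+i) * a i * a j * cc k k else 0)).
  apply: eq_big_nat => i /andP[_ hi]; apply: eq_big_nat => j /andP[_ hj].
  case ho: (odd (i+j)).
    rewrite big1 => [|k _]; last first.
      by case: eqP => // e; move: ho; rewrite e odd_double.
    by rewrite cc_0 -(odd_double_half (i+j)) ho /= add1n cc_odd !mulr0.
  set m := (i+j)./2.
  have e : (i + j = m.*2)%N by rewrite -[LHS]odd_double_half ho.
  rewrite -big_mkcond /= (eq_bigl (fun k => k == m)); last first.
    by move=> k; rewrite e; apply/idP/idP => /eqP ?; apply/eqP; lia.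
  rewrite big_nat1_eq ifT; last by lia.
  rewrite cc_0 e cc_even exprD; ring.
transitivity (\sum_(0<=i<s.+1) \sum_(0<=k<s.+1) \sum_(0<=j<s.+1)
  (if (i + j == k.*2)%N then (-1)^+(k+i) * a i * a j * cc k k else 0)).
  by apply: eq_big_nat => i _; apply: exchange_big_nat.
transitivity (\sum_(0<=k<s.+1) \sum_(0<=i<s.+1) \sum_(0<=j<s.+1)
  (if (i + j == k.*2)%N then (-1)^+(k+i) * a i * a j * cc k k else 0)).
  exact: exchange_big_nat.
apply: eq_big_nat => k hk.
transitivity (\sum_(0<=i<s.+1) (if ((i <= k.*2) && (k.*2 - i < s.+1))%N then
   (-1)^+(k+i) * a i * a (k.*2 - i)%N * cc k k else 0)).
  apply: eq_big_nat => i hi; rewrite -big_mkcond /=.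
  case: (ssrnat.leqP i k.*2) => hik /=.
    rewrite (eq_bigl (fun j => j == k.*2 - i)%N); last first.
      by move=> j; apply/idP/idP => /eqP ?; apply/eqP; lia.
    by rewrite big_nat1_eq.
  by rewrite big1 // => j /eqP; lia.
rewrite /bcoef big_distrl /=.
rewrite [RHS](big_nat_widen _ _ (s.+1)); last by lia.
rewrite [RHS](big_nat_widenl _ 0); last by lia.
rewrite [RHS]big_mkcond; apply: eq_big_nat => i /andP[_ hi] /=.
have -> : ((i <= k.*2) && (k.*2 - i < s.+1))%N =
          ((i < (minn k.*2 s).+1) && (k.*2 - s <= i))%N.
  by apply/idP/idP => /andP[? ?]; apply/andP; split; lia.
by case: ifP.
Qed.

End Help.

Section Norm.
Variable R : realType.
Variable d : nat.
Variable H : 'M[R]_d.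
Hypothesis Hsym : H^T = H.
Hypothesis Hpos : forall x : 'cV[R]_d, x != 0 -> 0 < (x^T *m H *m x) 0 0.

Lemma H_unit : H \in unitmx.
Proof.
rewrite unitmxE unitfE; apply/negP => /det0P [v vnz vH].
have nz : v^T != 0 by rewrite trmx_eq0.
by move: (Hpos nz); rewrite trmxK vH mul0mx mxE ltxx.
Qed.

Lemma abs_bound (x Q : R) : x ^+ 2 <= Q -> `|x| <= 1 + Q.
Proof.
move=> h.
have e : `|x| ^+ 2 = x ^+ 2 by rewrite real_normK ?num_real.
have n0 : 0 <= `|x| by [].
nra.
Qed.

Lemma sqrt_bound (y : R) : 0 <= y -> Num.sqrt y <= 1 + y.
Proof.
move=> y0; have e := sqr_sqrtr y0; have s0 : 0 <= Num.sqrt y by apply: sqrtr_ge0.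
nra.
Qed.

Definition ww (i : 'I_d) : 'cV[R]_d := invmx H *m delta_mx i 0.

Lemma coord_bound (v : 'cV[R]_d) (i : 'I_d) : Hinner H v v = 1 ->
  `|v i 0| <= 1 + Hinner H (ww i) (ww i).
Proof.
move=> qv.
have e1 : H *m ww i = delta_mx i 0 by rewrite /ww mulmxA mulmxV ?H_unit // mul1mx.
have e2 : (ww i)^T *m H = delta_mx 0 i.
  by rewrite -[X in _ *m X]Hsym -trmx_mul e1 trmx_delta.
have e : Hinner H (ww i) v = v i 0 by rewrite /Hinner e2 -rowE mxE.
apply: abs_bound; rewrite -e.
by have := Hinner_CS Hsym Hpos (ww i) v; rewrite qv mulr1.
Qed.

Lemma Lbound (L : 'M[R]_d) : exists B, forall v, Hnorm H v = 1 -> Hnorm H (L *m v) <= B.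
Proof.
set c := fun i => 1 + Hinner H (ww i) (ww i).
set A := L^T *m H *m L.
exists (1 + \sum_j \sum_i c i * `|A i j| * c j) => v hv.
have qv : Hinner H v v = 1.
  by rewrite -(sqr_sqrtr (q_ge0 Hpos v)) -/(Hnorm H v) hv expr1n.
apply: le_trans (sqrt_bound (q_ge0 Hpos _)) _; rewrite lerD2l.
have -> : Hinner H (L *m v) (L *m v) = \sum_j \sum_i v i 0 * A i j * v j 0.
  rewrite /Hinner.
  have -> : (L *m v)^T *m H *m (L *m v) = v^T *m A *m v by rewrite /A trmx_mul !mulmxA.
  rewrite mxE; apply: eq_bigr => j _.
  rewrite mxE big_distrl; apply: eq_bigr => i _; by rewrite [v^T 0 i]mxE.
apply: ler_sum => j _; apply: ler_sum => i _.
apply: le_trans (ler_norm _) _; rewrite !normrM.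
have ci := coord_bound i qv; have cj := coord_bound j qv.
apply: ler_pM => //; first exact: mulr_ge0.
by apply: ler_wpM2r.
Qed.

Lemma Hnorm_scale c x : Hnorm H (c *: x) = `|c| * Hnorm H x.
Proof.
rewrite /Hnorm HinnerZl HinnerZr mulrA -expr2 sqrtrM ?sqrtr_sqr //.
exact: sqr_ge0.
Qed.

Lemma Hop_le (L : 'M[R]_d) v : Hnorm H (L *m v) <= Hopnorm H L * Hnorm H v.
Proof.
have [->|nz] := eqVneq v 0.
  by rewrite mulmx0 /Hnorm Hinner0l sqrtr0 mulr0.
set t := Hnorm H v.
have tpos : 0 < t by rewrite /t /Hnorm sqrtr_gt0; exact: Hpos.
have ti : 0 <= t^-1 by rewrite invr_ge0 ltW.
have hv' : Hnorm H (t^-1 *: v) = 1.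
  by rewrite Hnorm_scale ger0_norm // mulVf ?gt_eqF.
have [B hB] := Lbound L.
have hs : has_sup [set Hnorm H (L *m v) | v in [set v : 'cV[R]_d | Hnorm H v = 1]].
  split; first by exists (Hnorm H (L *m (t^-1 *: v))); exists (t^-1 *: v).
  by exists B => y [x hx <-]; apply: hB.
have := sup_upper_bound hs (ex_intro2 _ _ (t^-1 *: v) hv' erefl).
rewrite -scalemxAr Hnorm_scale ger0_norm // -/(Hopnorm H L).
move=> h; have := ler_wpM2l (ltW tpos) h.
by rewrite mulrA mulfV ?gt_eqF // mul1r mulrC.
Qed.

End Norm.
Lemma b12 (R : realType) (a : nat -> R) s : (4 <= s)%N -> a 0%N = 1 ->
  (forall k, (1 <= k <= 4)%N -> a k = (k`!)%:R^-1) -> bcoef a s 1 = 0 /\ bcoef a s 2 = 0.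
Proof.
move=> s4 a0 afac.
have a1 : a 1%N = 1 by rewrite afac // invr1.
have a2 : a 2%N = 2^-1 by rewrite afac.
have a3 : a 3%N = 6^-1 by rewrite afac.
have a4 : a 4%N = 24^-1 by rewrite afac.
split; rewrite /bcoef.
  have -> : (1.*2 - s = 0)%N by lia.
  have -> : minn 1.*2 s = 2%N by lia.
  rewrite big_mkord !big_ord_recr big_ord0 /= a0 a1 a2.
  lra.
have -> : (2.*2 - s = 0)%N by lia.
have -> : minn 2.*2 s = 4%N by lia.
rewrite big_mkord !big_ord_recr big_ord0 /= a0 a1 a2 a3 a4.
lra.
Qed.

Lemma sgn_even (R : realType) n : (-1) ^+ (n + n) = 1 :> R.
Proof. by rewrite -signr_odd addnn odd_double expr0. Qed.
Lemma sgn_odd (R : realType) n : (-1) ^+ (n + n).+1 = -1 :> R.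
Proof. by rewrite exprS sgn_even mulr1. Qed.

Theorem theorem1 (R : realType) (d : nat) (H L : 'M[R]_d)
  (s : nat) (a : nat -> R) (h : R) :
  sym_posdef H ->
  L^T *m H + H *m L = 0 ->
  (4 <= s)%N ->
  a 0%N = 1 -> a s != 0 -> 0 < h ->
  (forall k, (1 <= k <= 4)%N -> a k = (k`!)%:R^-1) ->
  (forall k, (3 <= k <= s - 2)%N -> bcoef a s k = 0) ->
  bcoef a s s.-1 < 0 ->
  energy_order a s (s.*2 - 3)%N /\
  (h * Hopnorm H L <=
     Num.sqrt ((2 * a s * a (s - 2)%N - a s.-1 ^+ 2) / a s ^+ 2) ->
   forall u : 'cV[R]_d, Hnorm H (RKmat a s h L *m u) <= Hnorm H u).
Proof.
move=> [Hsym Hpos] Lskew s4 a0 asnz hpos afac bz bneg.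
have [b1 b2] := b12 s4 a0 afac.
have bzero : forall k, (1 <= k <= s - 2)%N -> bcoef a s k = 0.
  move=> k hk; case: (ltnP k 3) => hk3; last by apply: bz; lia.
  by case: k hk hk3 => [|[|[|k]]] //.
split.
  exists s.-1; split; last by lia.
  split; first by lia.
    by rewrite ltr0_neq0.
  by move=> k hk; apply: bzero; lia.
have [t st] : exists t, s = t.+2 by exists (s - 2)%N; lia.
subst s.
have -> : (t.+2 - 2 = t)%N by lia.
rewrite /= in bneg *.
move=> hop u.
set M := h *: L.
have Mskew : M^T *m H + H *m M = 0.
  by rewrite /M linearZ /= -scalemxAl -scalemxAr -scalerDr Lskew scaler0.
have eG : RKmat a t.+2 h L *m u = \sum_(k < t.+3) a k *: (M ^+ k *m u).
  by rewrite /RKmat mulmx_suml; apply: eq_bigr => k _; rewrite -scalemxAl.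
have b0 : bcoef a t.+2 0 = 1.
  by rewrite /bcoef sub0n min0n big_nat1 a0 expr0 !mulr1.
have bs : bcoef a t.+2 t.+2 = a t.+2 ^+ 2.
  rewrite /bcoef.
  have -> : (t.+2.*2 - t.+2 = t.+2)%N by lia.
  have -> : minn t.+2.*2 t.+2 = t.+2 by lia.
  by rewrite big_nat1 sgn_even mul1r -addnn addnK expr2.
have bs1 : bcoef a t.+2 t.+1 = a t.+1 ^+ 2 - 2 * a t.+2 * a t.
  rewrite /bcoef.
  have -> : (t.+1.*2 - t.+2 = t)%N by lia.
  have -> : minn t.+1.*2 t.+2 = t.+2 by lia.
  rewrite (big_ltn (m:=t)); last by lia.
  rewrite (big_ltn (m:=t.+1)); last by lia.
  rewrite big_nat1.
  have -> : (t.+1.*2 - t = t.+2)%N by lia.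
  have -> : (t.+1.*2 - t.+1 = t.+1)%N by lia.
  have -> : (t.+1.*2 - t.+2 = t)%N by lia.
  have -> : (t.+1 + t = (t + t).+1)%N by lia.
  have -> : (t.+1 + t.+2 = (t.+1 + t.+1).+1)%N by lia.
  rewrite sgn_even !sgn_odd; ring.
have eq : Hinner H (RKmat a t.+2 h L *m u) (RKmat a t.+2 h L *m u) =
    \sum_(k < t.+3) bcoef a t.+2 k * cc H M u k k.
  rewrite eG Hinner_suml; under eq_bigr do rewrite Hinner_sumr.
  rewrite -(energy Hsym Mskew).
  apply: eq_bigr => i _; apply: eq_bigr => j _.
  rewrite HinnerZl HinnerZr /cc; ring.
rewrite big_ord_recr big_ord_recr big_ord_recl /= big1 in eq; last first.
  move=> k _; rewrite bzero ?mul0r // /bump leq0n add1n; have := ltn_ord k; lia.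
rewrite b0 bs bs1 in eq.
set w := M ^+ t.+1 *m u.
have c00 : cc H M u 0 0 = Hinner H u u by rewrite /cc expr0 mul1mx.
have css : cc H M u t.+2 t.+2 = h ^+ 2 * Hinner H (L *m w) (L *m w).
  rewrite /cc exprS -mulmxE -mulmxA -/w /M -scalemxAl HinnerZl HinnerZr.
  by rewrite mulrA expr2.
have cs1 : cc H M u t.+1 t.+1 = Hinner H w w by [].
rewrite c00 css cs1 addr0 in eq.
rewrite /Hnorm ler_sqrt ?(q_ge0 Hpos) // eq.
set lam := Num.sqrt _ in hop.
have lam2 : lam ^+ 2 * a t.+2 ^+ 2 = 2 * a t.+2 * a t - a t.+1 ^+ 2.
  rewrite sqr_sqrtr; first by field.
  apply: divr_ge0; last exact: sqr_ge0.
  rewrite bs1 in bneg; lra.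
have := Hop_le Hsym Hpos L w.
rewrite -/(Hnorm H (L *m w)) -/(Hnorm H w).
set N := Hnorm H (L *m w); set W := Hnorm H w => hN.
have N0 : 0 <= N by apply: sqrtr_ge0.
have W0 : 0 <= W by apply: sqrtr_ge0.
have eN : N ^+ 2 = Hinner H (L *m w) (L *m w) by rewrite sqr_sqrtr ?(q_ge0 Hpos).
have eW : W ^+ 2 = Hinner H w w by rewrite sqr_sqrtr ?(q_ge0 Hpos).
have hX : h * N <= lam * W.
  apply: le_trans (_ : h * (Hopnorm H L * W) <= _).
    by rewrite ler_pM2l.
  by rewrite mulrA ler_wpM2r.
have hX2 : (h * N) ^+ 2 <= (lam * W) ^+ 2.
  by rewrite expr2 [X in _ <= X]expr2; apply: ler_pM => //; apply: mulr_ge0 => //; exact: ltW.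
have hX3 : a t.+2 ^+ 2 * (h * N) ^+ 2 <= a t.+2 ^+ 2 * (lam * W) ^+ 2.
  by apply: ler_wpM2l => //; exact: sqr_ge0.
have e3 : a t.+2 ^+ 2 * (lam * W) ^+ 2 = (2 * a t.+2 * a t - a t.+1 ^+ 2) * W ^+ 2.
  by rewrite -lam2; ring.
rewrite -eN -eW.
have e4 : a t.+2 ^+ 2 * (h ^+ 2 * N ^+ 2) = a t.+2 ^+ 2 * (h * N) ^+ 2 by ring.
rewrite e4.
lra.
Qed.
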